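(* Let $\epsilon=(\epsilon_n)\in(0,1]^{\mathbb{N}}$, let $x=(x_n),y=(y_n)\in\hat{\mathbb{C}}^{\mathbb{N}}$ be sequences of points of the Riemann sphere, regarded as points of $\mathbb{P}^1(A^\epsilon)$, and let $\omega\in\beta\mathbb{N}$. Then \[\lim_\omega d_{\mathbb{P}^1(\mathbb{C})}(x_n,y_n)^{\epsilon_n}=\lim_\omega d_{\mathbb{P}^1(\mathbb{C}_{\epsilon_n})}(s_{\epsilon_n}^{-1}x_n,s_{\epsilon_n}^{-1}y_n)=d_{\mathbb{P}^1(\mathscr{H}(\omega))}(x_\omega,y_\omega).\]
   Context: $A^\epsilon=\{(x_n)\in\mathbb{C}^{\mathbb{N}}:\sup_n|x_n|^{\epsilon_n}<\infty\}$ with norm $\sup_n|x_n|^{\epsilon_n}$; $\beta\mathbb{N}$ the ultrafilters on $\mathbb{N}$; $\mathscr{H}(\omega)$ the completion of $A^\epsilon/\{x:\lim_\omega|x_n|^{\epsilon_n}=0\}$ with norm $|x|_\omega=\lim_\omega|x_n|^{\epsilon_n}$. A sequence $(x_n)$ in $\hat{\mathbb{C}}$ defines a point of $\mathbb{P}^1(A^\epsilon)$: write $x_n=[z_{0,n}\colon z_{1,n}]$ with $\max(|z_{0,n}|,|z_{1,n}|)=1$, and take $[z_0\colon z_1]$ with $z_i=(z_{i,n})\in A^\epsilon$ (this gives a bijection $\hat{\mathbb{C}}^{\mathbb{N}}\to\mathbb{P}^1(A^\epsilon)$); $x_\omega\in\mathbb{P}^1(\mathscr{H}(\omega))$ is its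 image $[z_{0,\omega}\colon z_{1,\omega}]$. $\mathbb{C}_e=(\mathbb{C},|\cdot|^e)$, and $s_e\colon\mathbb{P}^{1,an}_{\mathbb{C}_e}\to\hat{\mathbb{C}}$ is the homeomorphism sending a seminorm to its $1/e$-th power (restricting to the identity of $\mathbb{P}^1(\mathbb{C})$ on rigid points). Spherical distances: on $\mathbb{P}^1(k)$ with $k$ Archimedean isometric to $\mathbb{C}_e$ (norm $|\cdot|_k$), $d([z_0\colon z_1],[w_0\colon w_1])=\frac{|z_0w_1-z_1w_0|_k}{(|z_0|_k^{2/e}+|z_1|_k^{2/e})^{e/2}(|w_0|_k^{2/e}+|w_1|_k^{2/e})^{e/2}}$ (for $e=1$ this is the standard chordal metric $d_{\mathbb{P}^1(\mathbb{C})}$); for $k$ non-Archimedean, $d=\frac{|z_0w_1-z_1w_0|}{\max\{|z_0|,|z_1|\}\max\{|w_0|,|w_1|\}}$. *)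

(* Defs.v *)
From HB Require Import structures.
From mathcomp Require Import all_boot all_order all_algebra.
From mathcomp Require Import all_classical all_reals all_analysis.
From mathcomp Require Import complex.
Set Implicit Arguments. Unset Strict Implicit. Unset Printing Implicit Defensive.
Import Order.TTheory GRing.Theory Num.Theory.
Import numFieldNormedType.Exports.
Local Open Scope ring_scope.
Local Open Scope classical_set_scope.

Notation normc := ComplexField.Normc.normc.

Section Defs.
Variable R : realType.

(* A point [z0 : z1] of the Riemann sphere P^1(C), given by a representative
   normalized by max(|z0|,|z1|) = 1. *)
Definition normalized_rep (z0 z1 : R[i]) : Prop :=
  Num.max (normc z0) (normc z1) = 1.

Definition chordal (z0 z1 w0 w1 : R[i]) : R :=
  normc (z0 * w1 - z1 * w0) /
  (Num.sqrt (normc z0 ^+ 2 + normc z1 ^+ 2) *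
   Num.sqrt (normc w0 ^+ 2 + normc w1 ^+ 2)).

(* Spherical distance on P^1(k), k Archimedean isometric to C_e, written
   in terms of the values of |.|_k :
   nD = |z0 w1 - z1 w0|_k, n0 = |z0|_k, n1 = |z1|_k, m0 = |w0|_k, m1 = |w1|_k. *)
Definition sph_arch (e nD n0 n1 m0 m1 : R) : R :=
  nD / ((n0 `^ (2 / e) + n1 `^ (2 / e)) `^ (e / 2) *
        (m0 `^ (2 / e) + m1 `^ (2 / e)) `^ (e / 2)).

Definition sph_nonarch (nD n0 n1 m0 m1 : R) : R :=
  nD / (Num.max n0 n1 * Num.max m0 m1).

(* d_{P^1(C_e)} between the rigid points [z0:z1] = s_e^{-1}[z0:z1] and
   [w0:w1] = s_e^{-1}[w0:w1]; the norm of C_e is |.|^e. *)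
Definition sph_Ce (e : R) (z0 z1 w0 w1 : R[i]) : R :=
  sph_arch e (normc (z0 * w1 - z1 * w0) `^ e)
    (normc z0 `^ e) (normc z1 `^ e) (normc w0 `^ e) (normc w1 `^ e).

Definition ulim (om : set_system nat) (u : nat -> R) : R := lim (u @ om).

(* The norm |.|_omega of H(omega) on the image of u = (u_n) in A^eps:
   |u|_omega = lim_omega |u_n|^{eps_n}. *)
Definition normH (eps : nat -> R) (om : set_system nat) (u : nat -> R[i]) : R :=
  ulim om (fun n => normc (u n) `^ eps n).

Definition two_H (eps : nat -> R) (om : set_system nat) : R :=
  normH eps om (fun _ => 2%:R).

(* H(omega) is Archimedean iff |2|_omega > 1; then it is isometric to C_e
   with |2|_omega = 2^e, i.e. e = log_2 |2|_omega. *)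
Definition H_archimedean (eps : nat -> R) (om : set_system nat) : bool :=
  1 < two_H eps om.

Definition H_exponent (eps : nat -> R) (om : set_system nat) : R :=
  ln (two_H eps om) / ln 2%:R.

(* Spherical distance d_{P^1(H(omega))}(x_omega, y_omega), where
   x_omega = [z0_omega : z1_omega], y_omega = [w0_omega : w1_omega] are the
   images of the points [z0 : z1], [w0 : w1] of P^1(A^eps). *)
Definition sph_H (eps : nat -> R) (om : set_system nat)
    (z0 z1 w0 w1 : nat -> R[i]) : R :=
  let nD := normH eps om (fun n => z0 n * w1 n - z1 n * w0 n) in
  let n0 := normH eps om z0 in let n1 := normH eps om z1 in
  let m0 := normH eps om w0 in let m1 := normH eps om w1 in
  if H_archimedean eps om
  then sph_arch (H_exponent eps om) nD n0 n1 m0 m1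
  else sph_nonarch nD n0 n1 m0 m1.

End Defs.

(* Main.v *)
Require Import Defs.
From HB Require Import structures.
From mathcomp Require Import all_boot all_order all_algebra.
From mathcomp Require Import all_classical all_reals all_analysis.
From mathcomp Require Import complex.
From mathcomp Require Import ring lra.
Import Order.TTheory GRing.Theory Num.Theory.
Import numFieldNormedType.Exports.
Local Open Scope ring_scope.
Local Open Scope classical_set_scope.

Section A.
Context {R : realType}.

Lemma normc_ge0 (z : R[i]) : 0 <= normc z.
Proof. by case: z => a b; exact: sqrtr_ge0. Qed.

Lemma normc2 : normc (2%:R : R[i]) = 2.
Proof. by rewrite (@normcMn R 1 2) ComplexField.Normc.normc1. Qed.

Lemma normc_subM (a b c d : R[i]) :
  normc (a * b - c * d) <= normc a * normc b + normc c * normc d.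
Proof.
rewrite -!ComplexField.Normc.normcM -(normcN (c * d)).
exact: (le_normcD (a * b) (- (c * d))).
Qed.

Lemma powR_div (x y r : R) : 0 <= x -> 0 <= y -> (x / y) `^ r = x `^ r / y `^ r.
Proof.
move=> x0 y0; rewrite powRM ?invr_ge0 // -powR_inv1 // -powRrM mulN1r powRN.
by [].
Qed.

Lemma key (e D a0 a1 b0 b1 : R) : 0 < e -> 0 <= a0 -> 0 <= a1 -> 0 <= b0 -> 0 <= b1 ->
  sph_arch e D (a0 `^ e) (a1 `^ e) (b0 `^ e) (b1 `^ e)
  = D / (Num.sqrt (a0 ^+ 2 + a1 ^+ 2) * Num.sqrt (b0 ^+ 2 + b1 ^+ 2)) `^ e.
Proof.
move=> e0 ha0 ha1 hb0 hb1.
have sq x : 0 <= x -> (x `^ e) `^ (2 / e) = x ^+ 2.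
  move=> x0; rewrite -powRrM mulrCA divff ?gt_eqF // mulr1.
  exact: powR_mulrn.
have sr x : 0 <= x -> x `^ (e / 2) = (Num.sqrt x) `^ e.
  by move=> x0; rewrite -powR12_sqrt // -powRrM mulrC.
rewrite /sph_arch !sq // !sr ?addr_ge0 ?sqr_ge0 //.
by rewrite powRM ?sqrtr_ge0.
Qed.
End A.

Section U.
Context {R : realType} {om : set_system nat}.
Variable (hom : UltraFilter om).

Lemma ucvg (u : nat -> R) (a b : R) : (forall n, a <= u n <= b) ->
  u @ om --> ulim om u.
Proof.
move=> hab.
have omP : ProperFilter om by exact: ultra_proper.
have : (u @ om) `[a, b].
  by apply: nearW => n /=; rewrite in_itv /=; exact: hab.
move=> /(@segment_compact R a b (u @ om) _) [] // p [_ cp].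
suff up : u @ om --> p by rewrite /ulim (cvg_lim _ up).
move=> B /= Bp.
have [//|Bc] := in_ultra_setVsetC (u @^-1` B) hom.
have [q [/= q1 q2]] := cp (~` B) B Bc Bp.
by [].
Qed.

Lemma Lpow (u e : nat -> R) (a ee : R) : (forall n, 0 <= u n) ->
  u @ om --> a -> e @ om --> ee -> 0 < ee ->
  (fun n => u n `^ e n) @ om --> a `^ ee.
Proof.
move=> u0 hu he ee0.
have omP : ProperFilter om by exact: ultra_proper.
have a0 : 0 <= a by apply: (cvgr_to_ge hu); apply: nearW.
have egt : \forall n \near om, ee / 2 < e n.
  apply: (cvgr_gt ee he (ee/2)).
  by rewrite ltr_pdivrMr // ltr_pMr // ltr1n.
have [a00|ap] := eqVneq a 0.
  rewrite a00 in hu *; rewrite powR0 ?gt_eqF //.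
  apply/cvgrPdist_le => eta eta0.
  have m0 : 0 < Num.min 1 (eta `^ (2 / ee)).
    by rewrite lt_min ltr01 /= powR_gt0.
  have hu' : \forall n \near om, `|0 - u n| < Num.min 1 (eta `^ (2/ee)).
    exact: (cvgr_dist_lt _ _ hu _ m0).
  move: hu' egt; apply: filterS2 => n hn he'.
  rewrite sub0r normrN ger0_norm ?powR_ge0 //.
  have e0 : 0 < e n.
    by rewrite (lt_trans _ he') // divr_gt0.
  have [->|un0] := eqVneq (u n) 0; first by rewrite powR0 ?gt_eqF // ltW.
  have unp : 0 < u n by rewrite lt_neqAle eq_sym un0 u0.
  move: hn; rewrite sub0r normrN ger0_norm ?u0 // lt_min => /andP[u1 ueta].
  apply: (le_trans (y := u n `^ (ee / 2))).
    by apply: ger_powR; [rewrite unp ltW | exact: ltW].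
  apply: (le_trans (y := (eta `^ (2 / ee)) `^ (ee / 2))).
    apply: ge0_ler_powR; rewrite ?nnegrE ?powR_ge0 ?ltW //.
    by rewrite divr_gt0.
  rewrite -powRrM (_ : 2 / ee * (ee / 2) = 1); first by rewrite powRr1 // ltW.
  by rewrite mulrA divfK ?gt_eqF // divff // pnatr_eq0.
have apos : 0 < a by rewrite lt_neqAle eq_sym ap a0.
have lnc : (fun n => ln (u n)) @ om --> ln a.
  exact: (cvg_comp _ _ hu (continuous_ln apos)).
have hc := cvg_comp _ _ (cvgM he lnc) (@continuous_expR R _).
rewrite /powR gt_eqF //.
have hg : \forall n \near om, a / 2 < u n.
  by apply: (cvgr_gt a hu); rewrite ltr_pdivrMr // ltr_pMr // ltr1n.
have heq : {near om, (expR \o (e \* (fun n => ln (u n)))) =1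
   (fun n => if u n == 0 then (e n == 0)%:R else expR (e n * ln (u n)))}.
  apply: filterS hg => n hn /=.
  by rewrite gt_eqF // (lt_trans _ hn) // divr_gt0.
exact: cvg_trans (near_eq_cvg heq) (hc _).
Qed.

Lemma Lpos (u e : nat -> R) (a ee : R) : (forall n, 0 <= u n) ->
  u @ om --> a -> e @ om --> ee -> 0 < a ->
  (fun n => u n `^ e n) @ om --> a `^ ee.
Proof.
move=> u0 hu he apos.
have omP : ProperFilter om by exact: ultra_proper.
have lnc : (fun n => ln (u n)) @ om --> ln a.
  exact: (cvg_comp _ _ hu (continuous_ln apos)).
have hc := cvg_comp _ _ (cvgM he lnc) (@continuous_expR R _).
rewrite /powR gt_eqF //.
have hg : \forall n \near om, a / 2 < u n.
  by apply: (cvgr_gt a hu); rewrite ltr_pdivrMr // ltr_pMr // ltr1n.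
have heq : {near om, (expR \o (e \* (fun n => ln (u n)))) =1
   (fun n => if u n == 0 then (e n == 0)%:R else expR (e n * ln (u n)))}.
  apply: filterS hg => n hn /=.
  by rewrite gt_eqF // (lt_trans _ hn) // divr_gt0.
exact: cvg_trans (near_eq_cvg heq) (hc _).
Qed.

Lemma nr_le1 {z0 z1 : R[i]} : normalized_rep z0 z1 -> normc z0 <= 1 /\ normc z1 <= 1.
Proof. by rewrite /normalized_rep => h; rewrite -h le_max lexx le_max lexx orbT. Qed.

Lemma nr_eq1 {z0 z1 : R[i]} : normalized_rep z0 z1 -> normc z0 = 1 \/ normc z1 = 1.
Proof. by rewrite /normalized_rep maxEle; case: ifP => _ h; [right|left]. Qed.

Lemma nr_sum {z0 z1 : R[i]} : normalized_rep z0 z1 -> 1 <= normc z0 ^+ 2 + normc z1 ^+ 2.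
Proof.
move=> h; case: (nr_eq1 h) => ->; rewrite expr1n.
  by rewrite lerDl sqr_ge0.
by rewrite lerDr sqr_ge0.
Qed.

Lemma nr_sqrt {z0 z1 : R[i]} : normalized_rep z0 z1 ->
  1 <= Num.sqrt (normc z0 ^+ 2 + normc z1 ^+ 2) <= 2.
Proof.
move=> h; have [h0 h1] := nr_le1 h.
apply/andP; split.
  by rewrite -sqrtr1 ler_sqrt ?addr_ge0 ?sqr_ge0 ?nr_sum.
have h2 : Num.sqrt (2 ^+ 2) = 2 :> R by rewrite sqrtr_sqr ger0_norm.
rewrite -[leRHS]h2 ler_sqrt ?sqr_ge0 //.
apply: (@le_trans _ _ (1 + 1)).
  apply: lerD; rewrite -(expr1n _ 2) ler_sqr ?nnegrE ?normc_ge0 //.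
by rewrite expr2; lra.
Qed.

Lemma Lmax (eps : nat -> R) (z0 z1 : nat -> R[i]) : (forall n, 0 < eps n <= 1) ->
  (forall n, normalized_rep (z0 n) (z1 n)) ->
  Num.max (normH eps om z0) (normH eps om z1) = 1.
Proof.
move=> heps hz.
have omP : ProperFilter om by exact: ultra_proper.
have le1 (z : nat -> R[i]) : (forall n, normc (z n) <= 1) -> normH eps om z <= 1.
  move=> hz1.
  have bd n : 0 <= normc (z n) `^ eps n <= 1.
    rewrite powR_ge0 /=.
    apply: (le_trans (y := 1 `^ eps n)); last by rewrite powR1.
    apply: ge0_ler_powR; rewrite ?nnegrE ?normc_ge0 ?ler01 //.
    by case/andP: (heps n) => /ltW.
  rewrite /normH; apply: (cvgr_to_le (ucvg _ _ _ bd)); apply: nearW => n; by case/andP: (bd n).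
have eq1 (z : nat -> R[i]) : (\forall n \near om, normc (z n) = 1) -> normH eps om z = 1.
  move=> h; rewrite /normH /ulim; apply: cvg_lim; first exact: Rhausdorff. apply: (cvg_near_cst (1:R)); apply: filterS h => n /= ->; by rewrite powR1.
have [hA|hA] := in_ultra_setVsetC [set n | normc (z0 n) = 1] hom.
  rewrite (eq1 z0 hA) max_l // le1 // => n; exact: (nr_le1 (hz n)).2.
rewrite (eq1 z1) ?max_r ?le1 //; first by move=> n; exact: (nr_le1 (hz n)).1.
by apply: filterS hA => n /= h; case: (nr_eq1 (hz n)).
Qed.
End U.
Theorem mainTheorem8 (R : realType) (eps : nat -> R)
  (x0 x1 y0 y1 : nat -> R[i]) (om : set_system nat) :
  (forall n, 0 < eps n <= 1) ->
  (forall n, normalized_rep (x0 n) (x1 n)) ->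
  (forall n, normalized_rep (y0 n) (y1 n)) ->
  UltraFilter om ->
  ulim om (fun n => chordal (x0 n) (x1 n) (y0 n) (y1 n) `^ eps n)
    = ulim om (fun n => sph_Ce (eps n) (x0 n) (x1 n) (y0 n) (y1 n))
  /\
  ulim om (fun n => sph_Ce (eps n) (x0 n) (x1 n) (y0 n) (y1 n))
    = sph_H eps om x0 x1 y0 y1.
Proof.
move=> heps hx hy hom.
have omP : ProperFilter om by exact: ultra_proper.
have ep n : 0 < eps n by case/andP: (heps n).
have e1 n : eps n <= 1 by case/andP: (heps n).
pose P n := Num.sqrt (normc (x0 n) ^+ 2 + normc (x1 n) ^+ 2) *
            Num.sqrt (normc (y0 n) ^+ 2 + normc (y1 n) ^+ 2).
pose ND n := normc (x0 n * y1 n - x1 n * y0 n).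
have hch : (fun n => chordal (x0 n) (x1 n) (y0 n) (y1 n) `^ eps n)
         = (fun n => ND n `^ eps n / P n `^ eps n).
  by apply: funext => n; rewrite /chordal powR_div ?normc_ge0 ?mulr_ge0 ?sqrtr_ge0.
have part1 : (fun n => chordal (x0 n) (x1 n) (y0 n) (y1 n) `^ eps n)
           = (fun n => sph_Ce (eps n) (x0 n) (x1 n) (y0 n) (y1 n)).
  by rewrite hch; apply: funext => n; rewrite /sph_Ce key ?normc_ge0.
split; first by rewrite part1.
rewrite -part1 hch.
have hPb n : 1 <= P n <= 4.
  have /andP[a1 a2] := nr_sqrt (hx n); have /andP[b1 b2] := nr_sqrt (hy n).
  rewrite /P; apply/andP; split; nra.
pose e := ulim om eps.
have he : eps @ om --> e.
  by apply: (ucvg hom _ 0 1) => n; rewrite ltW ?e1.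
have e0 : 0 <= e by apply: (cvgr_to_ge he); apply: nearW => n; exact: ltW.
pose p := ulim om P.
have hP : P @ om --> p by exact: (ucvg hom _ _ _ hPb).
have p1 : 1 <= p by apply: (cvgr_to_ge hP); apply: nearW => n; case/andP: (hPb n).
have hPe : (fun n => P n `^ eps n) @ om --> p `^ e.
  apply: (Lpos hom _ _ _ _ _ hP he); last by apply: lt_le_trans p1.
  by move=> n; case/andP: (hPb n) => h _; apply: le_trans h.
have NDb n : 0 <= ND n <= 2.
  have [a1 a2] := nr_le1 (hx n); have [b1 b2] := nr_le1 (hy n).
  have := normc_subM (x0 n) (y1 n) (x1 n) (y0 n).
  have := normc_ge0 (x0 n); have := normc_ge0 (x1 n).
  have := normc_ge0 (y0 n); have := normc_ge0 (y1 n).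
  rewrite /ND => g1 g2 g3 g4 g5; rewrite normc_ge0 /=.
  apply: (le_trans g5); rewrite -[2]/(1 + 1 : R); apply: lerD; apply: mulr_ile1 => //.
have NDeb n : 0 <= ND n `^ eps n <= 2.
  rewrite powR_ge0 /=; case/andP: (NDb n) => h0 h2.
  apply: (le_trans (y := 2 `^ eps n)).
    by apply: ge0_ler_powR; rewrite ?nnegrE // ltW.
  by apply: ler1_powR; rewrite ?e1 // ler1n.
pose L := ulim om (fun n => ND n `^ eps n).
have hL : (fun n => ND n `^ eps n) @ om --> L by exact: (ucvg hom _ _ _ NDeb).
have -> : ulim om (fun n => ND n `^ eps n / P n `^ eps n) = L / p `^ e.
  apply: cvg_lim; first exact: Rhausdorff.
  apply: (cvgM hL (cvgV _ hPe)).
  by rewrite gt_eqF // powR_gt0 // (lt_le_trans _ p1).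
have h2 : two_H eps om = 2 `^ e.
  rewrite /two_H /normH normc2; apply: cvg_lim; first exact: Rhausdorff.
  by apply: (Lpos hom (fun _ => 2) eps 2 e) => //; exact: cvg_cst.
rewrite /sph_H /H_archimedean /H_exponent h2.
have [epos|] := ltrP 0 e; last first.
  move=> ele; have e00 : e = 0 by apply/le_anti; rewrite ele e0.
  rewrite e00 !powRr0 ltxx /sph_nonarch (Lmax hom _ _ _ heps hx) (Lmax hom _ _ _ heps hy).
  by rewrite !mulr1 !divr1.
have -> : 1 < 2 `^ e.
  rewrite /powR pnatr_eq0 /= expR_gt1 mulr_gt0 // ln_gt0 //.
  by rewrite ltr1n.
rewrite ln_powR mulfK ?gt_eqF ?ln_gt0 ?ltr1n //.
have hN (z : nat -> R[i]) : (forall n, normc (z n) <= 1) ->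
    (fun n => normc (z n)) @ om --> ulim om (fun n => normc (z n)).
  by move=> hz; apply: (ucvg hom _ 0 1) => n; rewrite normc_ge0 hz.
have hNe (z : nat -> R[i]) : (forall n, normc (z n) <= 1) ->
    normH eps om z = (ulim om (fun n => normc (z n))) `^ e.
  move=> hz; apply: cvg_lim; first exact: Rhausdorff.
  by apply: (Lpow hom _ _ _ _ _ (hN z hz) he epos) => n; exact: normc_ge0.
have hN0 (z : nat -> R[i]) : (forall n, normc (z n) <= 1) ->
    0 <= ulim om (fun n => normc (z n)).
  by move=> hz; apply: (cvgr_to_ge (hN z hz)); apply: nearW => n; exact: normc_ge0.
have bx0 n := (nr_le1 (hx n)).1. have bx1 n := (nr_le1 (hx n)).2.
have by0 n := (nr_le1 (hy n)).1. have by1 n := (nr_le1 (hy n)).2.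
rewrite (hNe x0 bx0) (hNe x1 bx1) (hNe y0 by0) (hNe y1 by1).
rewrite key ?hN0 //.
have hS (z0 z1 : nat -> R[i]) (b0 : forall n, normc (z0 n) <= 1)
    (b1 : forall n, normc (z1 n) <= 1) :
    (fun n => Num.sqrt (normc (z0 n) ^+ 2 + normc (z1 n) ^+ 2)) @ om -->
    Num.sqrt (ulim om (fun n => normc (z0 n)) ^+ 2 + ulim om (fun n => normc (z1 n)) ^+ 2).
  have hsum : (fun n => normc (z0 n) ^+ 2 + normc (z1 n) ^+ 2) @ om -->
     ulim om (fun n => normc (z0 n)) ^+ 2 + ulim om (fun n => normc (z1 n)) ^+ 2.
    exact: (cvgD (cvgM (hN z0 b0) (hN z0 b0)) (cvgM (hN z1 b1) (hN z1 b1))).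
  exact: (cvg_comp _ _ hsum (@sqrt_continuous R _)).
have -> : p = Num.sqrt (ulim om (fun n => normc (x0 n)) ^+ 2 + ulim om (fun n => normc (x1 n)) ^+ 2)
  * Num.sqrt (ulim om (fun n => normc (y0 n)) ^+ 2 + ulim om (fun n => normc (y1 n)) ^+ 2).
  apply: cvg_lim; first exact: Rhausdorff.
  exact: (cvgM (hS _ _ bx0 bx1) (hS _ _ by0 by1)).
by [].
Qed.
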